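(* Let $(X,d_1)$ and $(Y,d_2)$ be complete metric spaces, $k\ge2$, $0<\rho,\rho'<1$, and let $\mu:X^k\to X$ and $\nu:Y^k\to Y$ be nonexpansive $k$-means that are coordinatewise $\rho$-contractive and coordinatewise $\rho'$-contractive respectively. Equip $X\times Y$ with the sup metric $d((x,y),(x',y'))=\max\{d_1(x,x'),d_2(y,y')\}$. Then the product mean $\mu\times\nu$ is a nonexpansive, coordinatewise $\max\{\rho,\rho'\}$-contractive $k$-mean on $X\times Y$. Furthermore, for every $n\ge k$, the $n$-mean $(\mu\times\nu)_n$ obtained by iterated $\beta$-extension of $\mu\times\nu$ coincides with the product mean $\mu_n\times\nu_n$ of the iterated $\beta$-extensions $\mu_n,\nu_n$ of $\mu,\nu$.
   Context: A $k$-mean is a map $\mu:X^k\to X$ with $\mu(x,\ldots,x)=x$. Nonexpansive: $d(\mu(\mathbf{x}),\mu(\mathbf{y}))\le\max_j d(x_j,y_j)$; coordinatewise $\rho$-contractive: $d(\mu(\mathbf{x}),\mu(\mathbf{y}))\le\rho\,d(x_j,y_j)$ when $\mathbf{x},\mathbf{y}$ differ only in coordinate $j$. Product mean of $n$-means $\mu,\nu$: $(\mu\times\nu)((x_1,y_1),\ldots,(x_n,y_n))=(\mu(x_1,\ldots,x_n),\nu(y_1,\ldots,y_n))$. Barycentric operator of a $k$-mean: $\beta(\mathbf{x})_j=\mu(x_1,\ldots,\widehat{x_j},\ldots,x_{k+1})$; a $(k+1)$-mean $\tilde\mu$ $\beta$-extends $\mu$ if $\beta^m(\mathbf{x})\to(\tilde\mu(\mathbf{x}),\ldots,\tilde\mu(\mathbf{x}))$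 for all $\mathbf{x}$. For a nonexpansive coordinatewise $\rho$-contractive $k$-mean $\mu$ on a complete metric space, $\mu_k=\mu$ and $\mu_{n+1}$ denotes the unique continuous $\beta$-extension of $\mu_n$ (these exist for all $n\ge k$). *)

(* Defs.v *)
From Stdlib Require Import Reals.
From mathcomp Require Import all_boot.
Set Implicit Arguments. Unset Strict Implicit. Unset Printing Implicit Defensive.

Local Open Scope R_scope.

Definition is_metric (X : Type) (d : X -> X -> R) : Prop :=
  (forall x y, d x y = 0 <-> x = y) /\
  (forall x y, d x y = d y x) /\
  (forall x y z, d x z <= d x y + d y z).

Definition cauchy_seq (X : Type) (d : X -> X -> R) (u : nat -> X) : Prop :=
  forall eps, 0 < eps -> exists N : nat, forall m n : nat,
    (N <= m)%nat -> (N <= n)%nat -> d (u m) (u n) < eps.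

Definition seq_converges (X : Type) (d : X -> X -> R) (u : nat -> X) (l : X) : Prop :=
  forall eps, 0 < eps -> exists N : nat, forall n : nat,
    (N <= n)%nat -> d (u n) l < eps.

Definition complete_metric (X : Type) (d : X -> X -> R) : Prop :=
  forall u : nat -> X, cauchy_seq d u -> exists l, seq_converges d u l.

Definition sup_dist (X : Type) (d : X -> X -> R) (n : nat) (x y : 'I_n -> X) : R :=
  \big[Rmax/0]_(i < n) d (x i) (y i).

Definition prod_dist (X Y : Type) (d1 : X -> X -> R) (d2 : Y -> Y -> R)
  (p q : X * Y) : R := Rmax (d1 p.1 q.1) (d2 p.2 q.2).

Definition is_mean (X : Type) (n : nat) (mu : ('I_n -> X) -> X) : Prop :=
  forall x : X, mu (fun _ => x) = x.

Definition nonexpansive (X : Type) (d : X -> X -> R) (n : nat)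
  (mu : ('I_n -> X) -> X) : Prop :=
  forall x y : 'I_n -> X, d (mu x) (mu y) <= sup_dist d x y.

Definition coord_contractive (X : Type) (d : X -> X -> R) (n : nat) (rho : R)
  (mu : ('I_n -> X) -> X) : Prop :=
  forall (x y : 'I_n -> X) (j : 'I_n),
    (forall i, i != j -> x i = y i) -> d (mu x) (mu y) <= rho * d (x j) (y j).

Definition continuous_mean (X : Type) (d : X -> X -> R) (n : nat)
  (f : ('I_n -> X) -> X) : Prop :=
  forall (x : 'I_n -> X) eps, 0 < eps -> exists delta, 0 < delta /\
    forall y : 'I_n -> X, sup_dist d x y < delta -> d (f x) (f y) < eps.

Definition prod_mean (X Y : Type) (n : nat) (mu : ('I_n -> X) -> X)
  (nu : ('I_n -> Y) -> Y) : ('I_n -> X * Y) -> X * Y :=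
  fun z => (mu (fun i => (z i).1), nu (fun i => (z i).2)).

(** Barycentric operator of an n-mean: beta(x)_j = mu(x without x_j). *)
Definition barycentric (X : Type) (n : nat) (mu : ('I_n -> X) -> X)
  (x : 'I_n.+1 -> X) : 'I_n.+1 -> X :=
  fun j => mu (fun i : 'I_n => x (lift j i)).

Definition beta_extends (X : Type) (d : X -> X -> R) (n : nat)
  (mu : ('I_n -> X) -> X) (mut : ('I_n.+1 -> X) -> X) : Prop :=
  is_mean mut /\
  forall x : 'I_n.+1 -> X,
    seq_converges (@sup_dist X d n.+1)
      (fun m => iter m (barycentric mu) x) (fun _ => mut x).

Definition iterated_beta_ext (X : Type) (d : X -> X -> R) (k : nat)
  (mu : ('I_k -> X) -> X) (M : forall n : nat, ('I_n -> X) -> X) : Prop :=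
  M k = mu /\
  forall n : nat, (k <= n)%nat ->
    continuous_mean d (M n.+1) /\ beta_extends d (M n) (M n.+1).

(* Main.v *)
Require Import Defs.
From Stdlib Require Import Reals.
From mathcomp Require Import all_boot.
From Stdlib Require Import Lra FunctionalExtensionality.

Set Implicit Arguments.
Local Open Scope R_scope.

Lemma Rmax_mono a b c e : a <= c -> b <= e -> Rmax a b <= Rmax c e.
Proof. unfold Rmax; repeat destruct Rle_dec; lra. Qed.

Lemma big_Rmax_mono n (F G : 'I_n -> R) :
  (forall i, F i <= G i) -> \big[Rmax/0]_(i < n) F i <= \big[Rmax/0]_(i < n) G i.
Proof.
move=> H; apply: (big_ind2 (fun a b => a <= b)); first lra.
  by move=> *; apply: Rmax_mono.
by move=> i _; apply: H.
Qed.

Lemma big_Rmax_ge n (F : 'I_n -> R) i : F i <= \big[Rmax/0]_(j < n) F j.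
Proof.
have : i \in index_enum 'I_n by rewrite mem_index_enum.
elim: (index_enum 'I_n) => [//|a r IH].
rewrite in_cons big_cons => /orP [/eqP -> | /IH H].
  by apply: Rmax_l.
apply: Rle_trans H _; apply: Rmax_r.
Qed.

Lemma sup_dist_ge X (d : X -> X -> R) n (x y : 'I_n -> X) i :
  d (x i) (y i) <= sup_dist d x y.
Proof. rewrite /sup_dist; exact: (@big_Rmax_ge n (fun j => d (x j) (y j)) i). Qed.

Lemma metric_nonneg X (d : X -> X -> R) : is_metric d -> forall x y, 0 <= d x y.
Proof.
move=> [H1 [H2 H3]] x y.
have := H3 x y x; rewrite (H2 y x); have := proj2 (H1 x x) erefl; lra.
Qed.

Lemma limit_unique X (d : X -> X -> R) u a b :
  is_metric d -> seq_converges d u a -> seq_converges d u b -> a = b.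
Proof.
move=> Hm Ha Hb.
have Hn := metric_nonneg Hm.
case: Hm => [H1 [H2 H3]].
apply H1.
destruct (Rle_lt_or_eq_dec 0 (d a b) (Hn a b)) as [Hp|He]; last by [].
exfalso.
have He : 0 < d a b / 2 by lra.
case: (Ha _ He) => N1 HN1; case: (Hb _ He) => N2 HN2.
have := HN1 (maxn N1 N2) (leq_maxl _ _).
have := HN2 (maxn N1 N2) (leq_maxr _ _).
have := H3 a (u (maxn N1 N2)) b.
rewrite (H2 a (u (maxn N1 N2))). lra.
Qed.

Lemma iter_bary_prod X Y n (A : ('I_n -> X) -> X) (B : ('I_n -> Y) -> Y)
  (z : 'I_n.+1 -> X * Y) m :
  iter m (barycentric (prod_mean A B)) z =
  fun j => (iter m (barycentric A) (fun i => (z i).1) j,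
            iter m (barycentric B) (fun i => (z i).2) j).
Proof.
elim: m => [|m IH] /=.
  by apply: functional_extensionality => j; case: (z j).
rewrite IH. by apply: functional_extensionality => j.
Qed.

Close Scope R_scope.

Theorem theorem7p5 (X Y : Type) (d1 : X -> X -> R) (d2 : Y -> Y -> R)
  (k : nat) (rho rho' : R)
  (mu : ('I_k -> X) -> X) (nu : ('I_k -> Y) -> Y) :
  is_metric d1 -> complete_metric d1 ->
  is_metric d2 -> complete_metric d2 ->
  (2 <= k)%nat ->
  Rlt 0 rho -> Rlt rho 1 -> Rlt 0 rho' -> Rlt rho' 1 ->
  is_mean mu -> nonexpansive d1 mu -> coord_contractive d1 rho mu ->
  is_mean nu -> nonexpansive d2 nu -> coord_contractive d2 rho' nu ->
  (is_mean (prod_mean mu nu) /\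
   nonexpansive (prod_dist d1 d2) (prod_mean mu nu) /\
   coord_contractive (prod_dist d1 d2) (Rmax rho rho') (prod_mean mu nu)) /\
  (forall (M : forall n : nat, ('I_n -> X) -> X)
          (N : forall n : nat, ('I_n -> Y) -> Y)
          (P : forall n : nat, ('I_n -> (X * Y)%type) -> (X * Y)%type),
     iterated_beta_ext d1 mu M ->
     iterated_beta_ext d2 nu N ->
     iterated_beta_ext (prod_dist d1 d2) (prod_mean mu nu) P ->
     forall n : nat, (k <= n)%nat -> P n = prod_mean (M n) (N n)).
Proof.
move=> Hm1 _ Hm2 _ Hk Hr0 _ Hr0' _ Hmu Hne1 Hc1 Hnu Hne2 Hc2.
have Hn1 := metric_nonneg Hm1; have Hn2 := metric_nonneg Hm2.
split.
  split; first by move=> [x y]; rewrite /prod_mean Hmu Hnu.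
  split.
    move=> x y; rewrite /prod_dist /=.
    apply: Rmax_lub.
      apply: Rle_trans (Hne1 _ _) _; apply: big_Rmax_mono => i /=; apply: Rmax_l.
    apply: Rle_trans (Hne2 _ _) _; apply: big_Rmax_mono => i /=; apply: Rmax_r.
  move=> x y j Hxy; rewrite /prod_dist /=.
  have H1 := Hc1 (fun i => (x i).1) (fun i => (y i).1) j
               (fun i Hi => f_equal fst (Hxy i Hi)).
  have H2 := Hc2 (fun i => (x i).2) (fun i => (y i).2) j
               (fun i Hi => f_equal snd (Hxy i Hi)).
  simpl in H1, H2.
  have := Rmax_l rho rho'; have := Rmax_r rho rho'.
  have := Rmax_l (d1 (x j).1 (y j).1) (d2 (x j).2 (y j).2).
  have := Rmax_r (d1 (x j).1 (y j).1) (d2 (x j).2 (y j).2).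
  have := Hn1 (x j).1 (y j).1; have := Hn2 (x j).2 (y j).2.
  move: H1 H2; set rm0 := Rmax rho rho'; set a := d1 (x j).1 (y j).1; set b := d2 (x j).2 (y j).2.
  move=> Hb Ha HMb HMa HR' HR H1 H2.
  have P1 : Rle 0 (Rmult (Rminus rm0 rho) a) by apply: Rmult_le_pos; lra.
  have P2 : Rle 0 (Rmult (Rminus rm0 rho') b) by apply: Rmult_le_pos; lra.
  have P3 : Rle 0 (Rmult rm0 (Rminus (Rmax a b) a)) by apply: Rmult_le_pos; lra.
  have P4 : Rle 0 (Rmult rm0 (Rminus (Rmax a b) b)) by apply: Rmult_le_pos; lra.
  apply: Rmax_lub; nra.
move=> M N P [HM0 HM] [HN0 HN] [HP0 HP].
elim=> [|n IH] Hkn; first by move: Hk Hkn; case: k {Hc1 Hc2 Hne1 Hne2 Hmu Hnu mu nu HM0 HN0 HP0 HM HN HP}.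
move: Hkn; rewrite leq_eqVlt => /orP [/eqP Ek | Hkn].
  by rewrite -Ek HP0 HM0 HN0.
have {}IH := IH Hkn.
case: (HP n Hkn) => _ [_ HPc].
case: (HM n Hkn) => _ [_ HMc].
case: (HN n Hkn) => _ [_ HNc].
rewrite IH in HPc.
apply: functional_extensionality => z.
have Hc := HPc z.
have E := iter_bary_prod (M n) (N n) z.
rewrite /prod_mean.
rewrite [LHS]surjective_pairing; congr pair.
  apply: (limit_unique (u := fun m => iter m (barycentric (M n)) (fun i => (z i).1) ord0) Hm1).
    move=> eps Heps; case: (Hc eps Heps) => K HK; exists K => m Hm.
    apply: Rle_lt_trans (HK m Hm).
    apply: Rle_trans (sup_dist_ge _ _ _ ord0).
    rewrite E /prod_dist /=; apply: Rmax_l.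
  move=> eps Heps; case: (HMc (fun i => (z i).1) eps Heps) => K HK; exists K => m Hm.
  apply: Rle_lt_trans (HK m Hm); exact: (sup_dist_ge _ _ _ ord0).
apply: (limit_unique (u := fun m => iter m (barycentric (N n)) (fun i => (z i).2) ord0) Hm2).
  move=> eps Heps; case: (Hc eps Heps) => K HK; exists K => m Hm.
  apply: Rle_lt_trans (HK m Hm).
  apply: Rle_trans (sup_dist_ge _ _ _ ord0).
  rewrite E /prod_dist /=; apply: Rmax_r.
move=> eps Heps; case: (HNc (fun i => (z i).2) eps Heps) => K HK; exists K => m Hm.
apply: Rle_lt_trans (HK m Hm); exact: (sup_dist_ge _ _ _ ord0).
Qed.
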